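(* For every $d\in\mathbb{N}$ and every $2\le i\le d$, $$\mu_i(T_d)\leqslant\frac12+\sum_{j=0}^{i-2}\frac{d-j}{d-j+1}.$$
   Context: $T_d=\operatorname{conv}(-\mathbb{1}_d,e_1,\dots,e_d)\subseteq\mathbb{R}^d$ is the standard terminal simplex. For a convex body $K\subseteq\mathbb{R}^d$ and $i\in\{1,\dots,d\}$, $\mu_i(K)=\min\{\mu\ge0:(\mu K+\mathbb{Z}^d)\cap U\ne\emptyset$ for every $(d-i)$-dimensional affine subspace $U\subseteq\mathbb{R}^d\}$. *)

(* Defs.v *)
From HB Require Import structures.
From mathcomp Require Import all_boot all_order all_algebra.
From mathcomp Require Import all_classical all_reals.
Set Implicit Arguments. Unset Strict Implicit. Unset Printing Implicit Defensive.
Import Order.TTheory GRing.Theory Num.Theory.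
Local Open Scope ring_scope.
Local Open Scope classical_set_scope.

Definition conv_pts (R : realType) (d n : nat) (v : 'I_n -> 'rV[R]_d)
  : set 'rV[R]_d :=
  [set x | exists lam : 'I_n -> R,
      (forall j, 0 <= lam j) /\ \sum_(j < n) lam j = 1 /\
      x = \sum_(j < n) lam j *: v j].

Definition terminal_vertex (R : realType) (d : nat) (j : 'I_d.+1) : 'rV[R]_d :=
  match unlift ord0 j with
  | None => \row_(k < d) (-1)
  | Some k => delta_mx 0 k
  end.

Definition terminal_simplex (R : realType) (d : nat) : set 'rV[R]_d :=
  conv_pts (@terminal_vertex R d).

Definition int_point (R : realType) (d : nat) : set 'rV[R]_d :=
  [set z | exists z' : 'rV[int]_d, z = map_mx (fun a : int => a%:~R) z'].

Definition dil_lattice (R : realType) (d : nat) (mu : R) (K : set 'rV[R]_d)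
  : set 'rV[R]_d :=
  [set y | exists x z, K x /\ int_point z /\ y = mu *: x + z].

Definition affine_subspace (R : realType) (d k : nat)
  (p : 'rV[R]_d) (M : 'M[R]_(k, d)) : set 'rV[R]_d :=
  [set y | exists a : 'rV[R]_k, y = p + a *m M].

Definition covering_set (R : realType) (d i : nat) (K : set 'rV[R]_d) : set R :=
  [set mu | 0 <= mu /\
     forall (p : 'rV[R]_d) (M : 'M[R]_(d - i, d)), row_free M ->
       dil_lattice mu K `&` affine_subspace p M !=set0].

(* mu_i(K): the minimum of the covering set (taken as its infimum, which
   coincides with the minimum whenever the minimum exists). *)
Definition covering_minimum (R : realType) (d i : nat) (K : set 'rV[R]_d) : R :=
  inf (covering_set i K).

(* Main.v *)
Require Import Defs.
From HB Require Import structures.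
From mathcomp Require Import all_boot all_order all_algebra.
From mathcomp Require Import all_classical all_reals.
From mathcomp Require Import ring lra zify.
Import Order.TTheory GRing.Theory Num.Theory.
Local Open Scope ring_scope.
Set Implicit Arguments. Unset Strict Implicit. Unset Printing Implicit Defensive.

Section S.
Variable R : realType.
Variable d : nat.

Definition ST (mu : R) (x : 'rV[R]_d) :=
  (\sum_l x 0 l <= mu) /\ forall l, \sum_m x 0 m - (d.+1)%:R * x 0 l <= mu.

Lemma ST_add mu nu x y : ST mu x -> ST nu y -> ST (mu + nu) (x + y).
Proof.
move=> [h1 h2] [h3 h4]; split.
  rewrite (eq_bigr (fun l => x 0 l + y 0 l)); last by move=> l _; rewrite mxE.
  by rewrite big_split /= lerD.
move=> l; rewrite (eq_bigr (fun l => x 0 l + y 0 l)); last by move=> m _; rewrite mxE.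
rewrite big_split /= mxE.
have := h2 l; have := h4 l; lra.
Qed.

Lemma ST_scale mu x c : 0 <= c -> ST mu x -> ST (c * mu) (c *: x).
Proof.
move=> c0 [h1 h2]; split.
  rewrite (eq_bigr (fun l => c * x 0 l)); last by move=> l _; rewrite mxE.
  by rewrite -mulr_sumr ler_wpM2l.
move=> l; rewrite (eq_bigr (fun l => c * x 0 l)); last by move=> m _; rewrite mxE.
rewrite -mulr_sumr mxE.
have := ler_wpM2l c0 (h2 l). lra.
Qed.

Lemma ST_mono mu nu x : mu <= nu -> ST mu x -> ST nu x.
Proof.
move=> h [h1 h2]; split; first exact: le_trans h.
by move=> l; exact: le_trans (h2 l) h.
Qed.

Lemma ST_delta k : ST 1 (delta_mx 0 k).
Proof.
have hs : \sum_l (delta_mx 0 k : 'rV[R]_d) 0 l = 1.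
  rewrite (bigD1 k) //= mxE !eqxx big1 ?addr0 // => l hl.
  by rewrite mxE (negbTE hl) andbF.
split; first by rewrite hs.
move=> l; rewrite hs mxE eqxx /=.
case: (l == k) => /=; last by rewrite mulr0 subr0.
rewrite mulr1 lerBlDr; apply: ler_wpDr => //.
Qed.

Lemma ST_m1 : ST 1 (\row_(k < d) (-1)).
Proof.
have hs : \sum_l (\row_(k < d) (-1) : 'rV[R]_d) 0 l = - d%:R.
  rewrite (eq_bigr (fun _ => -1)); last by move=> l _; rewrite mxE.
  by rewrite sumr_const card_ord mulNrn.
split; first by rewrite hs; apply: le_trans (_ : 0 <= 1) => //; rewrite oppr_le0.
move=> l; rewrite hs mxE -natr1. lra.
Qed.

Lemma ST1_terminal x : ST 1 x -> terminal_simplex x.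
Proof.
move=> [h1 h2].
set S := \sum_l x 0 l.
set l0 := (1 - S) / (d.+1)%:R.
have dpos : 0 < (d.+1)%:R :> R by rewrite ltr0n.
exists (fun j : 'I_d.+1 => if unlift ord0 j is Some k then x 0 k + l0 else l0).
split; [|split].
- move=> j; case: (unlift ord0 j) => [k|].
    have := h2 k; rewrite /l0 => h.
    have -> : x 0 k + (1 - S) / (d.+1)%:R = ((d.+1)%:R * x 0 k + 1 - S) / (d.+1)%:R.
      by field; rewrite addrC natr1 pnatr_eq0.
    apply: divr_ge0; last exact: ltW. rewrite /S; lra.
  by apply: divr_ge0; [rewrite subr_ge0|exact: ltW].
- rewrite big_ord_recl /= unlift_none.
  rewrite (eq_bigr (fun k => x 0 k + l0)); last by move=> k _; rewrite liftK.
  rewrite big_split /= sumr_const card_ord -/S /l0.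
  by rewrite -mulr_natr -natr1; field; rewrite ?natr1 ?addrC ?natr1 pnatr_eq0.
- apply/rowP => m. rewrite summxE big_ord_recl /= unlift_none /terminal_vertex unlift_none.
  rewrite (eq_bigr (fun k => (x 0 k + l0) * (delta_mx 0 k : 'rV[R]_d) 0 m)); last first.
    by move=> k _; rewrite liftK mxE.
  rewrite !mxE (bigD1 m) //= !mxE !eqxx /= big1 ?addr0; last first.
    by move=> k hk; rewrite mxE eq_sym (negbTE hk) andbF mulr0.
  by rewrite mulr1; ring.
Qed.


Lemma int_pointD (z1 z2 : 'rV[R]_d) : int_point z1 -> int_point z2 -> int_point (z1 + z2).
Proof.
move=> [a ->] [b ->]; exists (a + b); apply/rowP => l; rewrite !mxE.
by rewrite rmorphD.
Qed.

Lemma int_point_delta (n : int) k : int_point (n%:~R *: (delta_mx 0 k : 'rV[R]_d)).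
Proof.
exists (n *: delta_mx 0 k); apply/rowP => l; rewrite !mxE.
by case: (_ && _); rewrite ?mulr1 ?mulr0.
Qed.

Lemma in_dil mu t z : 0 < mu -> ST mu t -> int_point z ->
  dil_lattice mu (@terminal_simplex R d) (t + z).
Proof.
move=> mu0 ht hz; exists (mu^-1 *: t), z; split; [|split] => //.
  apply: ST1_terminal; rewrite -(mulVf (lt0r_neq0 mu0)).
  by apply: ST_scale => //; rewrite invr_ge0 ltW.
by rewrite scalerA mulfV ?lt0r_neq0 // scale1r.
Qed.

Lemma sum_if (A : {set 'I_d}) (c : R) :
  \sum_l (if l \in A then c else 0) = c *+ #|A|.
Proof. by rewrite -big_mkcond /= sumr_const. Qed.

Lemma decomp3 (V : zmodType) (a b c : V) : a = b + c + (a - b - c).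
Proof. by rewrite -(addrA a) -opprD (addrC (b + c)) subrK. Qed.

Lemma segment (K : {set 'I_d}) k (s : R) : k \notin K ->
  exists sig (n : int) (w : 'rV[R]_d),
    ST ((d - #|K|)%:R / (d - #|K|).+1%:R) sig /\
    (forall l, l \notin K -> w 0 l = 0) /\
    s *: delta_mx 0 k = sig + n%:~R *: delta_mx 0 k + w.
Proof.
move=> kK.
have hK : (#|K| < d)%N.
  have := max_card (k |: K); rewrite cardsU1 kK card_ord /=; by [].
set dd := (d - #|K|)%N.
have dd0 : (0 < dd)%N by rewrite subn_gt0.
have ddR : (dd%:R : R) != 0 by rewrite pnatr_eq0 -lt0n.
have ddR1 : (dd.+1%:R : R) != 0 by rewrite pnatr_eq0.
have hdd : (d%:R : R) = dd%:R + #|K|%:R by rewrite -natrD subnK // ltnW.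
set tm : 'rV[R]_d := \row_l (if l \in k |: K then - (dd%:R)^-1 else 0).
have htm : ST 1 tm.
  have hs : \sum_l tm 0 l = - (dd%:R)^-1 *+ #|K|.+1.
    have -> : #|K|.+1 = #|k |: K| by rewrite cardsU1 kK.
    rewrite -(sum_if (k |: K)).
    by apply: eq_bigr => l _; rewrite mxE.
  split.
    rewrite hs mulNrn; apply: le_trans (_ : 0 <= 1) => //; rewrite oppr_le0 mulrn_wge0 // invr_ge0 ler0n //.
  move=> l; rewrite hs mxE; case: (l \in k |: K).
    rewrite -mulr_natr -!natr1 hdd.
    have E : forall a b : R, a = b -> a <= b by move=> a b ->.
    by apply: E; field.
  rewrite mulr0 subr0 mulNrn.
  apply: le_trans (_ : 0 <= 1) => //; rewrite oppr_le0 mulrn_wge0 // invr_ge0 ler0n //.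
set n := Num.floor (s + (dd.+1%:R)^-1).
set th := s + (dd.+1%:R)^-1 - n%:~R.
have th0 : 0 <= th by rewrite subr_ge0 floor_le.
have th1 : th <= 1.
  have := floor_itv (s + (dd.+1%:R)^-1); rewrite -/n => /andP [_ h].
  rewrite /th lerBlDr; rewrite intrD in h; rewrite addrC ltW // addrC (addrC 1) //.
set c := dd%:R / dd.+1%:R : R.
have c0 : 0 <= c by rewrite divr_ge0 // ler0n.
set sg := (th * c) *: (delta_mx 0 k : 'rV[R]_d) + ((1 - th) * c) *: tm.
exists sg; exists n; exists (s *: delta_mx 0 k - sg - n%:~R *: (delta_mx 0 k : 'rV[R]_d)).
split; [|split].
have th1' : 0 <= 1 - th by rewrite subr_ge0.
- have hST := ST_add (ST_scale (mulr_ge0 th0 c0) (ST_delta k)) (ST_scale (mulr_ge0 th1' c0) htm).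
  have E : th * c * 1 + (1 - th) * c * 1 = c by ring.
  by rewrite E in hST.
- move=> l lK; rewrite /sg /tm !mxE !in_setU1 (negbTE lK) orbF.
  rewrite eqxx /=; case: (@eqP _ l k) => [e|hlk] /=; last by rewrite !mulr0 subr0 !addr0 subrr.
  rewrite !mulr1 /th /c -natr1.
  have : (dd%:R : R) + 1 != 0 by rewrite natr1.
  move: ddR; move: (dd%:R : R) (n%:~R : R) => D N hD hD1.
  by field; rewrite hD hD1.
- exact: decomp3.
Qed.


Definition cst (j : nat) : R := (d - j)%:R / (d - j).+1%:R.

Lemma cst_ge0 j : 0 <= cst j.
Proof. by rewrite /cst divr_ge0 ?ler0n. Qed.

Lemma peel r : forall (K : {set 'I_d}) (x t : 'rV[R]_d) mu, #|K| = r -> 0 <= mu ->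
  (forall l, l \notin K -> t 0 l = 0) ->
  (exists tau z, ST mu tau /\ int_point z /\ x + t = tau + z) ->
  exists tau z, ST (mu + \sum_(0 <= j < r) cst j) tau /\ int_point z /\ x = tau + z.
Proof.
elim: r => [|r IH] K x t mu hK mu0 ht [tau [z [h1 [h2 h3]]]].
  have t0 : t = 0.
    apply/rowP => l; rewrite mxE; apply: ht; rewrite (cards0_eq hK). by rewrite inE.
  exists tau, z; rewrite big_geq // addr0; split => //; split => //.
  by rewrite -h3 t0 addr0.
have : (0 < #|K|)%N by rewrite hK.
case/card_gt0P => k kK.
set K' := K :\ k.
have hK' : #|K'| = r.
  by move: hK; rewrite (cardsD1 k K) kK add1n => -[].
have kK' : k \notin K' by rewrite setD11.
have [sg [n [w [hsg [hw hu]]]]] := segment (- t 0 k) kK'.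
set u := (- t 0 k) *: (delta_mx 0 k : 'rV[R]_d) in hu.
have hst : ST (mu + cst r) (tau + sg) by apply: ST_add => //; rewrite /cst -hK'.
have := IH K' x (t + u - w) (mu + cst r) hK'.
case.
- by rewrite addr_ge0 // cst_ge0.
- move=> l; rewrite /K' in_setD1 negb_and negbK => /orP [/eqP ->|lK].
    rewrite !mxE (hw k kK') eqxx /=. by rewrite eqxx mulr1 addrN subr0.
  rewrite !mxE (ht l lK) (hw l); last by rewrite /K' in_setD1 negb_and lK orbT.
  have -> : (l == k) = false by apply/negbTE; apply: contraNneq lK => ->.
  by rewrite /= mulr0 addr0 subr0.
- exists (tau + sg), (z + n%:~R *: delta_mx 0 k); split => //; split.
    by apply: int_pointD => //; exact: int_point_delta.
  rewrite -!addrA (_ : u - w = sg + n%:~R *: delta_mx 0 k); last by rewrite hu addrK.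
  by rewrite (addrA x t) h3 -addrA (addrCA z).
- move=> tau' [z' [h1' [h2' h3']]].
  exists tau', z'; split => //.
  by rewrite big_nat_recr //= addrA (addrAC mu).
Qed.


Definition dot (a x : 'rV[R]_d) := \sum_l a 0 l * x 0 l.

Lemma dotD a x y : dot a (x + y) = dot a x + dot a y.
Proof. by rewrite /dot -big_split; apply: eq_bigr => l _; rewrite mxE mulrDr. Qed.

Lemma dotZ a c x : dot a (c *: x) = c * dot a x.
Proof. by rewrite /dot mulr_sumr; apply: eq_bigr => l _; rewrite mxE mulrCA. Qed.

Lemma dot_delta a j : dot a (delta_mx 0 j) = a 0 j.
Proof.
rewrite /dot (bigD1 j) //= mxE !eqxx mulr1 big1 ?addr0 // => l hl.
by rewrite mxE (negbTE hl) andbF mulr0.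
Qed.

Lemma width1 (a u v : 'rV[R]_d) j b : ST 1 u -> ST 1 v -> a 0 j != 0 ->
  2 * `|a 0 j| <= dot a u - dot a v ->
  exists tau z, ST (1/2) tau /\ int_point z /\ dot a (tau + z) = b.
Proof.
move=> hu hv aj hdiff.
set g := `|a 0 j|.
have g0 : 0 < g by rewrite normr_gt0.
set lo := dot a v / 2; set hi := dot a u / 2.
have hlg : lo + g <= hi by rewrite /lo /hi /g; lra.
set m := Num.floor ((b - lo) / g).
set y := b - m%:~R * g.
have hy1 : lo <= y.
  have := floor_le ((b - lo) / g); rewrite -/m ler_pdivlMr // => h; rewrite /y; lra.
have hy2 : y <= hi.
  have := floor_itv ((b - lo) / g); rewrite -/m => /andP [_].
  rewrite ltr_pdivrMr // intrD mulrDl mul1r => h; rewrite /y; lra.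
set th := (y - lo) / (hi - lo).
have hl : 0 < hi - lo by lra.
have th0 : 0 <= th by apply: divr_ge0; [rewrite subr_ge0 | exact: ltW].
have th1 : 0 <= 1 - th.
  by rewrite subr_ge0 ler_pdivrMr // mul1r lerD2r.
exists ((th / 2) *: u + ((1 - th) / 2) *: v).
exists ((if 0 < a 0 j then m else - m)%:~R *: delta_mx 0 j).
split; [|split].
- have := ST_add (ST_scale (divr_ge0 th0 (ler0n _ 2)) hu) (ST_scale (divr_ge0 th1 (ler0n _ 2)) hv).
  by have -> : th / 2 * 1 + (1 - th) / 2 * 1 = 1 / 2 by ring.
- exact: int_point_delta.
- rewrite !dotD !dotZ dot_delta.
  have -> : (if 0 < a 0 j then m else - m)%:~R * a 0 j = m%:~R * g.
    rewrite /g; case: ifP => h.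
      by rewrite ger0_norm // ltW.
    rewrite ltr0_norm; last by rewrite lt_neqAle aj /= leNgt h.
    by rewrite mulrNz mulrN mulNr.
  have -> : th / 2 * dot a u + (1 - th) / 2 * dot a v = th * hi + (1 - th) * lo.
    by rewrite /hi /lo; ring.
  have -> : th * hi + (1 - th) * lo = y.
    rewrite /th; field; by rewrite lt0r_neq0.
  by rewrite /y subrK.
Qed.


Lemma dot_m1 a : dot a (\row_(k < d) (-1)) = - \sum_l a 0 l.
Proof. by rewrite /dot -sumrN; apply: eq_bigr => l _; rewrite mxE mulrN1. Qed.

Lemma width (a : 'rV[R]_d) b : a != 0 ->
  exists tau z, ST (1/2) tau /\ int_point z /\ dot a (tau + z) = b.
Proof.
move=> a0.
have [l0 hl0] : exists l, a 0 l != 0.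
  apply/existsP; apply: contraNT a0 => /existsPn h; apply/eqP/rowP => l.
  by rewrite mxE; move/negPn/eqP: (h l).
have [jM _ hM] := @arg_maxP _ R 'I_d l0 xpredT (fun l => a 0 l) isT.
have [jm _ hm] := @arg_minP _ R 'I_d l0 xpredT (fun l => a 0 l) isT.
set P := a 0 jM; set Q := a 0 jm; set S := \sum_l a 0 l.
case: (leP 0 Q) => hQ.
  have hP : 0 < P.
    have := hM l0 isT; have := hm l0 isT => /=.
    rewrite -/P -/Q => h1 h2.
    apply: lt_le_trans h2; by rewrite lt_neqAle eq_sym hl0 (le_trans hQ h1).
  have hS : P <= S.
    rewrite /S (bigD1 jM) //= lerDl; apply: sumr_ge0 => l _.
    exact: le_trans hQ (hm l isT).
  apply: (width1 b (ST_delta jM) ST_m1 (lt0r_neq0 hP)).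
  rewrite dot_delta dot_m1 -/S -/P gtr0_norm //; lra.
case: (leP P 0) => hP.
  have hS : S <= Q.
    rewrite /S (bigD1 jm) //= gerDl; apply: sumr_le0 => l _.
    exact: le_trans (hM l isT) hP.
  apply: (width1 b ST_m1 (ST_delta jm) (ltr0_neq0 hQ)).
  rewrite dot_delta dot_m1 -/S -/Q ltr0_norm //; lra.
case: (leP P (- Q)) => hPQ.
  apply: (width1 b (ST_delta jM) (ST_delta jm) (lt0r_neq0 hP)).
  rewrite !dot_delta -/Q -/P gtr0_norm //; lra.
apply: (width1 b (ST_delta jM) (ST_delta jm) (ltr0_neq0 hQ)).
rewrite !dot_delta -/Q -/P ltr0_norm //; lra.
Qed.


Definition EC (C : {set 'I_d}) : 'M[R]_(#|C|, d) :=
  \matrix_(r, j) ((enum_val r == j)%:R).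

Lemma sub_EC_supp (C : {set 'I_d}) (x : 'rV[R]_d) : (x <= EC C)%MS -> forall j, j \notin C -> x 0 j = 0.
Proof.
case/submxP => u -> j jC; rewrite mxE big1 // => r _; rewrite mxE.
have : enum_val r \in C by exact: enum_valP.
case: eqP => [->|_]; first by rewrite (negbTE jC).
by rewrite mulr0.
Qed.

Lemma delta_sub_EC (C : {set 'I_d}) (j : 'I_d) : j \in C -> ((delta_mx 0 j : 'rV[R]_d) <= EC C)%MS.
Proof.
move=> jC; have -> : (delta_mx 0 j : 'rV[R]_d) = row (enum_rank_in jC j) (EC C).
  apply/rowP => l; rewrite !mxE enum_rankK_in // eq_sym.
  by case: (l == j).
exact: row_sub.
Qed.

Lemma EC_mono (C' C : {set 'I_d}) : C' \subset C -> (EC C' <= EC C)%MS.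
Proof.
move=> sub; apply/row_subP => r.
have -> : row r (EC C') = delta_mx 0 (enum_val r).
  by apply/rowP => l; rewrite !mxE eq_sym.
apply: delta_sub_EC; exact: (fintype.subsetP sub _ (enum_valP r)).
Qed.

Lemma greedy r : forall m (A : 'M[R]_(m, d)), (d <= \rank A + r)%N ->
  exists C : {set 'I_d}, (#|C| <= r)%N /\ (1%:M <= A + EC C)%MS.
Proof.
elim: r => [|r IH] m A hr.
  exists finset.set0; split; first by rewrite cards0.
  apply: submx_trans (addsmxSl _ _); apply: submx_full.
  by rewrite /row_full eqn_leq rank_leq_col -(addn0 (\rank A)).
case: (boolP (1%:M <= A)%MS) => hA.
  exists finset.set0; split; first by rewrite cards0.
  exact: submx_trans hA (addsmxSl _ _).
have [j hj] : exists j, ~~ ((delta_mx 0 j : 'rV[R]_d) <= A)%MS.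
  apply/existsP; apply: contraNT hA => /existsPn h; apply/row_subP => j.
  have -> : row j (1%:M : 'M[R]_d) = delta_mx 0 j by apply/rowP => l; rewrite !mxE eq_sym.
  by move/negPn: (h j).
set A' := (A + (delta_mx 0 j : 'rV[R]_d))%MS.
have hlt : (\rank A < \rank A')%N.
  rewrite (ltn_leqif (mxrank_leqif_sup (addsmxSl A (delta_mx 0 j)))).
  apply: contra hj => h; exact: submx_trans (addsmxSr _ _) h.
have hr' : (d <= \rank A' + r)%N by apply: leq_trans hr _; rewrite addnS -addSn leq_add2r.
have [C' [hC' hsub]] := IH _ A' hr'.
exists (j |: C'); split.
  by rewrite cardsU1; case: (j \notin C') => /=; rewrite ?add1n ?add0n // (leq_trans hC').
apply: submx_trans hsub _.
rewrite addsmx_sub; apply/andP; split.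
  rewrite addsmx_sub addsmxSl /=.
  apply: submx_trans (addsmxSr _ _); apply: delta_sub_EC; exact: setU11.
apply: submx_trans (addsmxSr _ _); apply: EC_mono; exact: finset.subsetUr.
Qed.


Lemma dot_mx a (y : 'rV[R]_d) : dot a y = (a *m y^T) 0 0.
Proof. by rewrite mxE /dot; apply: eq_bigr => l _; rewrite mxE. Qed.

Lemma normal_vec m (W : 'M[R]_(m, d)) : (\rank W < d)%N ->
  exists a : 'rV[R]_d, a != 0 /\ forall y : 'rV[R]_d, (y <= W)%MS -> dot a y = 0.
Proof.
move=> hW.
set K := kermx W^T.
have K0 : K != 0.
  rewrite -mxrank_eq0 mxrank_ker mxrank_tr; by rewrite subn_eq0 -ltnNge.
have [r hr] : exists r, row r K != 0.
  apply/existsP; apply: contraNT K0 => /existsPn h; apply/eqP/matrixP => r l.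
  by move/negPn/eqP: (h r) => /rowP /(_ l); rewrite !mxE.
exists (row r K); split => // y /submxP [u ->].
have hk : row r K *m W^T = 0 by apply/sub_kermxP; exact: row_sub.
by rewrite dot_mx trmx_mul mulmxA hk mul0mx mxE.
Qed.


Lemma dotB a x y : dot a (x - y) = dot a x - dot a y.
Proof. by rewrite dotD -scaleN1r dotZ mulN1r. Qed.

Lemma sum_cst_mono n m : (n <= m)%N ->
  \sum_(0 <= j < n) cst j <= \sum_(0 <= j < m) cst j.
Proof.
move=> nm; rewrite (big_cat_nat (leq0n n) nm) /= lerDl.
by apply: sumr_ge0 => j _; exact: cst_ge0.
Qed.

Lemma key i (p : 'rV[R]_d) (M : 'M[R]_(d - i, d)) : (2 <= i)%N -> (i <= d)%N ->
  row_free M ->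
  exists tau z, ST (1/2 + \sum_(0 <= j < i.-1) cst j) tau /\ int_point z /\
    (exists al, tau + z = p + al *m M).
Proof.
move=> i2 id hM.
have rM : \rank M = (d - i)%N by apply/eqP.
have d0 : (0 < d)%N by apply: leq_trans id; apply: leq_trans i2.
have hdi : (d <= \rank M + i)%N by rewrite rM subnK.
have [C [hC hsubC]] := greedy hdi.
pose c : 'I_d := Ordinal d0.
pose C1 := if #|C| == 0%N then [set c] else C.
have hC1 : (#|C1| <= i)%N.
  rewrite /C1; case: ifP => _ //; rewrite cards1; exact: leq_trans i2.
have hsub1 : (1%:M <= M + EC C1)%MS.
  apply: submx_trans hsubC _; apply: addsmxS => //; apply: EC_mono.
  rewrite /C1; case: ifP => [/eqP/cards0_eq ->|_] //; exact: finset.sub0set.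
have [c0 c0C] : exists c0, c0 \in C1.
  apply/card_gt0P; rewrite /C1; case: ifP => [_|/negbT]; first by rewrite cards1.
  by rewrite lt0n.
set K := C1 :\ c0.
have hK : (#|K| <= i.-1)%N.
  move: hC1; rewrite (cardsD1 c0 C1) c0C -/K -subn1 /=; lia.
have [a [a0 ha]] : exists a : 'rV[R]_d, a != 0 /\
    forall y : 'rV[R]_d, (y <= M + EC K)%MS -> dot a y = 0.
  apply: normal_vec.
  apply: leq_ltn_trans (mxrank_adds_leqif M (EC K)) _.
  rewrite rM; apply: leq_ltn_trans (leq_add (leqnn _) (rank_leq_row (EC K))) _.
  apply: leq_ltn_trans (leq_add (leqnn _) hK) _.
  rewrite -subn1; lia.
have aK : forall l, l \in K -> a 0 l = 0.
  move=> l lK; rewrite -dot_delta; apply: ha.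
  apply: submx_trans (addsmxSr _ _); exact: delta_sub_EC.
have decomp : forall x : 'rV[R]_d, exists al (w : 'rV[R]_d),
    (forall l, l \notin C1 -> w 0 l = 0) /\ x = al *m M + w.
  move=> x; have : (x <= M + EC C1)%MS by apply: submx_trans hsub1; exact: submx1.
  case/sub_addsmxP => u ->; exists u.1, (u.2 *m EC C1); split => //.
  by apply: sub_EC_supp; exact: submxMl.
have dotw : forall w : 'rV[R]_d, (forall l, l \notin C1 -> w 0 l = 0) ->
    dot a w = a 0 c0 * w 0 c0.
  move=> w hw; rewrite /dot (bigD1 c0) //= big1 ?addr0 // => l hl.
  case: (boolP (l \in C1)) => lC; last by rewrite hw // mulr0.
  by rewrite aK ?mul0r // /K in_setD1 hl lC.
have ac0 : a 0 c0 != 0.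
  apply: contraNneq a0 => h0.
  have hsq : dot a a = 0.
    have [al' [w' [hw' e]]] := decomp a.
    rewrite {2}e dotD (dotw _ hw') h0 mul0r addr0; apply: ha.
    by apply: submx_trans (addsmxSl _ _); exact: submxMl.
  apply/eqP/rowP => l; rewrite mxE.
  move: hsq; rewrite /dot => /psumr_eq0P => /(_ (fun _ _ => sqr_ge0 _) l isT) /eqP.
  by rewrite mulf_eq0 orbb => /eqP.
have [tau [z [htau [hz hdot]]]] := width (dot a p) a0.
have [al [w [hw e]]] := decomp (tau + z - p).
have hw0 : w 0 c0 = 0.
  have : dot a (tau + z - p) = 0 by rewrite dotB hdot subrr.
  rewrite e dotD (dotw _ hw) ha; last by apply: submx_trans (addsmxSl _ _); exact: submxMl.
  by rewrite add0r => /eqP; rewrite mulf_eq0 (negbTE ac0) /= => /eqP.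
have hwK : forall l, l \notin K -> w 0 l = 0.
  move=> l; rewrite /K in_setD1 negb_and negbK => /orP [/eqP ->|lC] //; exact: hw.
have hex : exists tau0 z0, ST (1/2) tau0 /\ int_point z0 /\ (p + al *m M) + w = tau0 + z0.
  by exists tau, z; split => //; split => //; rewrite -addrA -e addrC subrK.
have h12 : 0 <= 1/2 :> R by rewrite divr_ge0 // ler0n.
have [tau' [z' [h1 [h2 h3]]]] := @peel #|K| K (p + al *m M) w (1/2) erefl h12 hwK hex.
exists tau', z'; split; last by split => //; exists al.
apply: ST_mono h1; rewrite lerD2l; exact: sum_cst_mono.
Qed.


End S.

Unset Implicit Arguments.
Set Strict Implicit.

Theorem corollary5p6 (R : realType) (d i : nat) :
  (2 <= i)%N -> (i <= d)%N ->
  covering_minimum i (@terminal_simplex R d) <=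
    2^-1 + \sum_(0 <= j < i.-1) ((d - j)%:R / (d - j).+1%:R).
Proof.
move=> i2 id.
set mu := 2^-1 + _.
have mu0 : 0 < mu.
  rewrite /mu; apply: ltr_pwDl; first by rewrite invr_gt0 ltr0n.
  by apply: sumr_ge0 => j _; exact: cst_ge0.
have mem : covering_set i (@terminal_simplex R d) mu.
  split; first exact: ltW.
  move=> p M hM.
  have [tau [z [h1 [h2 [al e]]]]] := key p i2 id hM.
  exists (tau + z); split; last by exists al.
  apply: in_dil => //.
  by move: h1; rewrite div1r.
have hlb : has_lbound (covering_set i (@terminal_simplex R d)).
  by exists 0 => x [].
exact: (ge_inf hlb mem).
Qed.
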